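(* There exists a constant $C>0$ such that for all $v=(v^1,\dots,v^{n_{\mathcal E}})\in L^2_{H^1}(\mathcal N;\mathbb{R}^3)$ and all $V\in\mathbb{R}^{3n_{\mathcal V}}$, \[ \|v\|_{L^2(\mathcal N;\mathbb{R}^3)}\le C\Big(\|v'\|^2_{L^2(\mathcal N;\mathbb{R}^3)}+\Big|\int_{\mathcal N}v\Big|^2+\big|v(0)-(A^-_I)^TV\big|^2+\big|v(\ell)-(A^+_I)^TV\big|^2\Big)^{1/2}, \] where $v'=(\partial_sv^1,\dots,\partial_sv^{n_{\mathcal E}})$, $v(0)=[v^1(0),\dots,v^{n_{\mathcal E}}(0)]^T\in\mathbb{R}^{3n_{\mathcal E}}$, $v(\ell)=[v^1(\ell^1),\dots,v^{n_{\mathcal E}}(\ell^{n_{\mathcal E}})]^T\in\mathbb{R}^{3n_{\mathcal E}}$, and $|\cdot|$ denotes the Euclidean norm.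
   Context: A finite connected graph with vertices $j=1,\dots,n_{\mathcal V}$ and oriented edges $i=1,\dots,n_{\mathcal E}$; edge $i$ has length $\ell^i>0$ and is identified with the interval $[0,\ell^i]$, $s=0$ corresponding to the vertex it leaves and $s=\ell^i$ to the vertex it enters. $J_j^-$ ($J_j^+$) is the set of edges leaving (entering) vertex $j$. $A^+_{I}\in\mathbb{R}^{3n_{\mathcal V}\times 3n_{\mathcal E}}$ is the block matrix whose $3\times3$ block in block row $j$, block column $i$ is $I_3$ if $i\in J_j^+$ and $0$ otherwise; $A^-_I$ is defined likewise with $J_j^-$. $L^2(\mathcal N;\mathbb{R}^3)=\prod_iL^2(0,\ell^i;\mathbb{R}^3)$, $L^2_{H^1}(\mathcal N;\mathbb{R}^3)=\prod_iH^1(0,\ell^i;\mathbb{R}^3)$ (no continuity at vertices), with norms $\|y\|=(\sum_i\|y^i\|^2)^{1/2}$; $\int_{\mathcal N}v=\sum_i\int_0^{\ell^i}v^i\,ds$. *)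

(* Defs.v *)
From HB Require Import structures.
From mathcomp Require Import all_boot all_order all_algebra.
From mathcomp Require Import all_classical all_reals all_analysis.
Set Implicit Arguments. Unset Strict Implicit. Unset Printing Implicit Defensive.
Import Order.TTheory GRing.Theory Num.Theory.
Import numFieldNormedType.Exports.
Local Open Scope classical_set_scope.
Local Open Scope ring_scope.

Definition int0 {R : realType} (s : R) (f : R -> R) : R :=
  (\int[@lebesgue_measure R]_(x in `[0, s]) f x)%R.

(* H^1(0,l) in one dimension: f is (the continuous representative of) an
   H^1 function with weak derivative f' in L^2(0,l):
   f' is measurable and square-integrable on [0,l], and
   f s = f 0 + \int_0^s f'  for all s in [0,l]. *)
Definition isH1 {R : realType} (l : R) (f f' : R -> R) : Prop :=
  [/\ measurable_fun `[0, l] f',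
      (@lebesgue_measure R).-integrable `[0, l] (EFin \o (fun x => f' x ^+ 2))
    & forall s, 0 <= s <= l -> f s = f 0 + int0 s f'].

Definition adjacent (nV nE : nat) (tail head : 'I_nE -> 'I_nV) : rel 'I_nV :=
  fun j k => [exists i : 'I_nE,
     ((tail i == j) && (head i == k)) || ((tail i == k) && (head i == j))].

Definition graph_connected (nV nE : nat) (tail head : 'I_nE -> 'I_nV) : Prop :=
  (0 < nV)%N /\ forall j k : 'I_nV, connect (adjacent tail head) j k.

Definition sqn3 {R : realType} (x : 'I_3 -> R) : R := \sum_(k < 3) x k ^+ 2.

Definition Jminus (nV nE : nat) (tail : 'I_nE -> 'I_nV) (j : 'I_nV) : pred 'I_nE :=
  fun i => tail i == j.
Definition Jplus (nV nE : nat) (head : 'I_nE -> 'I_nV) (j : 'I_nV) : pred 'I_nE :=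
  fun i => head i == j.

(* Block i (in R^3) of (A_I^{+/-})^T V, where V in R^{3 nV} is given by blocks
   V j in R^3 and block (j,i) of A_I^{+/-} is I_3 if i \in J_j^{+/-}, else 0. *)
Definition AT_apply {R : realType} (nV nE : nat) (J : 'I_nV -> pred 'I_nE)
    (V : 'I_nV -> 'I_3 -> R) (i : 'I_nE) (k : 'I_3) : R :=
  \sum_(j < nV) (if i \in J j then V j k else 0).

(* Main.v *)
Require Import Defs.
From HB Require Import structures.
From mathcomp Require Import all_boot all_order all_algebra.
From mathcomp Require Import all_classical all_reals all_analysis.
From mathcomp Require Import lra ring measurable_realfun.
Set Implicit Arguments. Unset Strict Implicit. Unset Printing Implicit Defensive.
Import Order.TTheory GRing.Theory Num.Theory.
Import numFieldNormedType.Exports.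
Local Open Scope classical_set_scope.
Local Open Scope ring_scope.
Section S.
Context {R : realType}.
Notation mu := (@lebesgue_measure R).

Lemma bnd_of (A : set R) (g : R -> R) M :
  (forall x, A x -> `|g x| <= M) -> [bounded g x | x in A].
Proof.
move=> H; rewrite /bounded_near; near=> N => t At /=.
apply: le_trans (H t At) _; near: N; exact: nbhs_pinfty_ge (num_real _).
Unshelve. all: end_near. Qed.

Lemma mu_itv (l : R) : 0 <= l -> mu `[0, l] = l%:E.
Proof.
move=> l0; rewrite lebesgue_measure_itv /= lte_fin oppr0 addr0.
by case: ifPn => //; rewrite -leNgt => l0'; have -> : l = 0 by apply/le_anti; rewrite l0 l0'.
Qed.

Lemma mu_itv_fin (l : R) : 0 <= l -> (mu `[0%R, l] < +oo)%E.
Proof. by move=> l0; rewrite mu_itv // ltry. Qed.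

Lemma Rint_cst (l c : R) : 0 <= l -> \int[mu]_(x in `[0, l]) c = c * l.
Proof. move=> l0; rewrite Rintegral_cst//; congr (_ * _); rewrite -[RHS]/(fine l%:E); congr fine; exact: mu_itv. Qed.

Lemma int_cst (l c : R) : 0 <= l -> mu.-integrable `[0, l] (EFin \o (fun _ : R => c)).
Proof.
move=> l0; apply: measurable_bounded_integrable => //; first exact: mu_itv_fin.
exact: bnd_of (fun x _ => lexx `|c|).
Qed.

Lemma abs_le_sq1 (y : R) : `|y| <= y ^+ 2 + 1.
Proof.
rewrite -real_normK ?num_real //; have := normr_ge0 y; set t := `|y|; nra.
Qed.

Lemma sub_itv0 (s l : R) : s <= l -> `[0, s] `<=` `[0, l].
Proof.
move=> sl x /=; rewrite !in_itv /= => /andP[h1 h2]; rewrite h1 /=.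
exact: le_trans h2 sl.
Qed.

Lemma sq_le (y M : R) : `|y| <= M -> y ^+ 2 <= M ^+ 2.
Proof. by rewrite -real_normK ?num_real // => h; have := normr_ge0 y; nra. Qed.

Lemma abs_between (a b y : R) : a <= y <= b -> `|y| <= `|a| + `|b|.
Proof.
move=> /andP[h1 h2]; rewrite ler_norml.
have := ler_norm a; have := ler_norm b; have := ler_norm (- a); have := ler_norm (- b).
rewrite !normrN; lra.
Qed.

Section edge.
Variables (l : R) (f f' : R -> R).
Hypothesis l0 : 0 < l.
Hypothesis H : isH1 l f f'.

Lemma edge_int2 : mu.-integrable `[0, l] (EFin \o (fun x => f' x ^+ 2)).
Proof. by case: H. Qed.

Lemma edge_int1 : mu.-integrable `[0, l] (EFin \o f').
Proof.
case: H => mf' i2 _.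
have := (@le_integrable _ _ _ mu `[0, l] (measurable_itv _) (EFin \o f') (EFin \o (fun x => f' x ^+ 2 + 1))).
apply.
- exact/measurable_EFinP.
- move=> x _ /=; rewrite lee_fin [`|f' x ^+ 2 + 1|]ger0_norm; first exact: abs_le_sq1.
  by rewrite addr_ge0 // sqr_ge0.
- have -> : EFin \o (fun x => f' x ^+ 2 + 1) =
     (EFin \o (fun x => f' x ^+ 2)) \+ (EFin \o (fun _ => 1)).
    by apply/funext => x /=; rewrite EFinD.
  by apply: integrableD => //; exact: int_cst (ltW l0).
Qed.

Lemma edge_meas : measurable_fun `[0, l] f.
Proof.
have hc := parameterized_integral_continuous (ltW l0) edge_int1.
have mF := subspace_continuous_measurable_fun (measurable_itv `[0, l]) hc.
apply: (@eq_measurable_fun _ _ _ _ _ (fun x => f 0 + parameterized_integral mu 0 x f')).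
  move=> x; rewrite inE /= in_itv /= => /andP[h1 h2].
  by case: H => _ _ hf; rewrite [f x]hf ?h1 ?h2.
by apply: measurable_funD => //; exact: measurable_cst.
Qed.

Lemma edge_A0 : 0 <= int0 l (fun x => f' x ^+ 2).
Proof. by apply: Rintegral_ge0 => x _; exact: sqr_ge0. Qed.

Lemma edge_cs s : 0 <= s <= l -> (f s - f 0) ^+ 2 <= l * int0 l (fun x => f' x ^+ 2).
Proof.
move=> /andP[s0 sl].
have hA0 := edge_A0.
case: (ltrgtP 0 s) s0 => // [spos _|<- _]; last first.
  by rewrite subrr expr0n /= mulr_ge0 // ltW.
case: H => _ _ hf; rewrite [f s]hf; last by rewrite (ltW spos) sl.
rewrite addrC addKr.
set B := int0 s f'; set As := int0 s (fun x => f' x ^+ 2).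
have i1s : mu.-integrable `[0, s] (EFin \o f').
  by apply: integrableS edge_int1 => //; exact: sub_itv0.
have i2s : mu.-integrable `[0, s] (EFin \o (fun x => f' x ^+ 2)).
  by apply: integrableS edge_int2 => //; exact: sub_itv0.
pose c := B / s.
have hcs : B = c * s by rewrite /c divfK // gt_eqF.
have key : (2 * c) * B <= As + c ^+ 2 * s.
  have -> : (2 * c) * B = \int[mu]_(x in `[0, s]) ((2 * c) * f' x).
    by rewrite RintegralZl.
  have -> : As + c ^+ 2 * s = \int[mu]_(x in `[0, s]) (f' x ^+ 2 + c ^+ 2).
    by rewrite RintegralD // ?Rint_cst // ?ltW //; exact: int_cst (ltW spos).
  apply: le_Rintegral => //.
  - have -> : EFin \o (fun x => 2 * c * f' x) = (fun x => ((2 * c)%:E * (EFin \o f') x)%E).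
      by apply/funext => x /=; rewrite EFinM.
    exact: integrableZl.
  - have -> : EFin \o (fun x => f' x ^+ 2 + c ^+ 2) =
       (EFin \o (fun x => f' x ^+ 2)) \+ (EFin \o (fun _ => c ^+ 2)).
      by apply/funext => x /=; rewrite EFinD.
    by apply: integrableD => //; exact: int_cst (ltW spos).
  - by move=> x _; have := sqr_ge0 (f' x - c); nra.
have hAs : As <= int0 l (fun x => f' x ^+ 2).
  rewrite -subr_ge0 /As /int0.
  rewrite (@Rintegral_itvB _ _ (BLeft 0) (BRight l) s) ?bnd_simp ?(ltW spos) //; last by case: H.
  by apply: Rintegral_ge0 => x _; exact: sqr_ge0.
have hAs0 : 0 <= As by apply: Rintegral_ge0 => x _; exact: sqr_ge0.
rewrite hcs in key *.
have : (c * s) ^+ 2 <= s * As by nra.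
move=> h; apply: le_trans h _; nra.
Qed.

Lemma edge_int_of M (g : R -> R) : measurable_fun `[0, l] g ->
  (forall s, 0 <= s <= l -> `|g s| <= M) -> mu.-integrable `[0, l] (EFin \o g).
Proof.
move=> mg hM; apply: measurable_bounded_integrable => //; first exact: mu_itv_fin (ltW l0).
apply: (@bnd_of _ _ M) => x; rewrite /= in_itv /=; exact: hM.
Qed.

Lemma edge_P M : (forall s, 0 <= s <= l -> `|f s| <= M) ->
  int0 l (fun s => f s ^+ 2) <= l * M ^+ 2.
Proof.
move=> hM.
have i2 : mu.-integrable `[0, l] (EFin \o (fun s => f s ^+ 2)).
  apply: (@edge_int_of (M ^+ 2)); first exact: measurable_funX edge_meas.
  move=> s hs; rewrite ger0_norm ?sqr_ge0 //; exact: sq_le (hM s hs).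
rewrite mulrC -Rint_cst; last exact: ltW.
apply: le_Rintegral => //; first exact: int_cst (ltW l0).
move=> x; rewrite /= in_itv /= => hx; exact: sq_le (hM x hx).
Qed.

Lemma edge_J a b : (forall s, 0 <= s <= l -> a <= f s <= b) ->
  l * a <= int0 l f <= l * b.
Proof.
move=> hab.
have i1 : mu.-integrable `[0, l] (EFin \o f).
  apply: (@edge_int_of (`|a| + `|b|)); first exact: edge_meas.
  move=> s hs; exact: abs_between (hab s hs).
apply/andP; split.
- rewrite mulrC -Rint_cst; last exact: ltW.
  apply: le_Rintegral => //; first exact: int_cst (ltW l0).
  by move=> x; rewrite /= in_itv /= => hx; case/andP: (hab x hx).
- rewrite mulrC -Rint_cst; last exact: ltW.
  apply: le_Rintegral => //; first exact: int_cst (ltW l0).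
  by move=> x; rewrite /= in_itv /= => hx; case/andP: (hab x hx).
Qed.

End edge.

Lemma le_sum_term n (F : 'I_n -> R) i : (forall j, 0 <= F j) -> F i <= \sum_j F j.
Proof.
move=> h; rewrite (bigD1 i) //= lerDl; exact: sumr_ge0.
Qed.

Lemma abs_of_sq (x T : R) : x ^+ 2 <= T -> `|x| <= Num.sqrt T.
Proof. by move=> h; rewrite -sqrtr_sqr; exact: ler_wsqrtr. Qed.

Section graph.
Variables (nV nE : nat) (tail head : 'I_nE -> 'I_nV) (W : 'I_nV -> R) (B : R).
Hypothesis B0 : 0 <= B.
Hypothesis hedge : forall i, `|W (head i) - W (tail i)| <= B.

Lemma adj_bound x y : Defs.adjacent tail head x y -> `|W y - W x| <= B.
Proof.
move=> /existsP[i /orP[/andP[/eqP h1 /eqP h2]|/andP[/eqP h1 /eqP h2]]].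
  by rewrite -h1 -h2.
by rewrite -h1 -h2 distrC.
Qed.

Lemma path_bound p x : path (Defs.adjacent tail head) x p ->
  `|W (last x p) - W x| <= (size p)%:R * B.
Proof.
elim: p x => [|y p IH] x /=; first by rewrite subrr normr0 mul0r.
move=> /andP[hxy hp].
have h1 := IH y hp; have h2 := adj_bound hxy.
have : `|W (last y p) - W x| <= `|W (last y p) - W y| + `|W y - W x|.
  by apply: le_trans (ler_normD _ _); rewrite addrA subrK.
rewrite -addn1 natrD mulrDl mul1r; lra.
Qed.

Lemma conn_bound x y : connect (Defs.adjacent tail head) x y ->
  `|W y - W x| <= nV%:R * B.
Proof.
move/connectP=> [p hp ->]; case: (shortenP hp) => p' hp' uq _.
apply: le_trans (path_bound hp') _; apply: ler_wpM2r => //; rewrite ler_nat.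
have := max_card (mem (x :: p')); rewrite card_ord (card_uniqP uq) /=.
by move=> h; apply: leq_trans h; exact: leqnSn.
Qed.
End graph.

Section scalar.
Variables (nV nE : nat) (tail head : 'I_nE -> 'I_nV) (ell : 'I_nE -> R).
Hypothesis hconn : graph_connected tail head.
Hypothesis hl : forall i, 0 < ell i.

Definition Lt := \sum_(i < nE) ell i.
Definition sL := Num.sqrt Lt.
Definition Kc := sL + 2.
Definition qc := sL + 1 + nV%:R * Kc.
Definition Zc := (1 + 2 * Lt * qc) / Lt.
Definition C0 := Lt * Zc ^+ 2.

Lemma C0_ge0 : 0 <= C0.
Proof.
by rewrite /C0 mulr_ge0 ?sqr_ge0 // sumr_ge0 // => i _; exact: ltW.
Qed.

Lemma scalar_bound (f f' : 'I_nE -> R -> R) (W : 'I_nV -> R) :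
  (forall i, isH1 (ell i) (f i) (f' i)) ->
  \sum_(i < nE) int0 (ell i) (fun s => f i s ^+ 2) <= C0 * (
     \sum_(i < nE) int0 (ell i) (fun s => f' i s ^+ 2)
   + (\sum_(i < nE) int0 (ell i) (f i)) ^+ 2
   + \sum_(i < nE) (f i 0 - W (tail i)) ^+ 2
   + \sum_(i < nE) (f i (ell i) - W (head i)) ^+ 2).
Proof.
move=> hH.
have hl0 i : 0 <= ell i by exact: ltW.
set SA := \sum_(i < nE) int0 (ell i) (fun s => f' i s ^+ 2).
set I := \sum_(i < nE) int0 (ell i) (f i).
set Em := \sum_(i < nE) (f i 0 - W (tail i)) ^+ 2.
set Ep := \sum_(i < nE) (f i (ell i) - W (head i)) ^+ 2.
have SA0 : 0 <= SA by apply: sumr_ge0 => i _; exact: edge_A0.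
have Em0 : 0 <= Em by apply: sumr_ge0 => i _; exact: sqr_ge0.
have Ep0 : 0 <= Ep by apply: sumr_ge0 => i _; exact: sqr_ge0.
have I20 := sqr_ge0 I.
have T0 : 0 <= SA + I ^+ 2 + Em + Ep by lra.
set T := SA + I ^+ 2 + Em + Ep.
set r := Num.sqrt T.
have r0 : 0 <= r by exact: sqrtr_ge0.
have rT : r ^+ 2 = T by exact: sqr_sqrtr.
have hAi i : int0 (ell i) (fun s => f' i s ^+ 2) <= T.
  have : int0 (ell i) (fun s => f' i s ^+ 2) <= SA.
    by apply: (@le_sum_term _ (fun i => int0 (ell i) (fun s => f' i s ^+ 2))) => j; exact: edge_A0.
  rewrite /T; lra.
have hmi i : `|f i 0 - W (tail i)| <= r.
  apply: abs_of_sq.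
  have : (f i 0 - W (tail i)) ^+ 2 <= Em.
    by apply: (@le_sum_term _ (fun i => (f i 0 - W (tail i)) ^+ 2)) => j; exact: sqr_ge0.
  rewrite /T; lra.
have hpi i : `|f i (ell i) - W (head i)| <= r.
  apply: abs_of_sq.
  have : (f i (ell i) - W (head i)) ^+ 2 <= Ep.
    by apply: (@le_sum_term _ (fun i => (f i (ell i) - W (head i)) ^+ 2)) => j; exact: sqr_ge0.
  rewrite /T; lra.
have hI : `|I| <= r by apply: abs_of_sq; rewrite /T; lra.
have L0 : 0 <= Lt by apply: sumr_ge0 => i _.
have hli i : ell i <= Lt by exact: (@le_sum_term _ ell).
have sL0 : 0 <= sL by exact: sqrtr_ge0.
have hw i s : 0 <= s <= ell i -> `|f i s - f i 0| <= sL * r.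
  move=> hs; rewrite /sL /r -sqrtrM //; apply: abs_of_sq.
  apply: le_trans (edge_cs (hl i) (hH i) hs) _.
  apply: ler_pM; [exact: hl0 | exact: edge_A0 | exact: hli | exact: hAi].
have hedge i : `|W (head i) - W (tail i)| <= Kc * r.
  have h1 := hw i (ell i) ltac:(by rewrite hl0 lexx).
  have -> : W (head i) - W (tail i) =
    (f i (ell i) - f i 0) - (f i (ell i) - W (head i)) + (f i 0 - W (tail i)) by ring.
  have t1 := ler_normD ((f i (ell i) - f i 0) - (f i (ell i) - W (head i))) (f i 0 - W (tail i)).
  have t2 := ler_normB (f i (ell i) - f i 0) (f i (ell i) - W (head i)).
  have := hpi i; have := hmi i.
  rewrite /Kc mulrDl; lra.
have Kr0 : 0 <= Kc * r by rewrite mulr_ge0 // addr_ge0.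
pose j0 : 'I_nV := Ordinal hconn.1.
set c := W j0.
have hv i s : 0 <= s <= ell i -> `|f i s - c| <= qc * r.
  move=> hs.
  have h1 := hw i s hs.
  have h2 := conn_bound Kr0 hedge (hconn.2 j0 (tail i)).
  have -> : f i s - c = (f i s - f i 0) + (f i 0 - W (tail i)) + (W (tail i) - c) by ring.
  have t1 := ler_normD ((f i s - f i 0) + (f i 0 - W (tail i))) (W (tail i) - c).
  have t2 := ler_normD (f i s - f i 0) (f i 0 - W (tail i)).
  have := hmi i.
  rewrite /qc !mulrDl mul1r -mulrA; lra.
have hJ i : ell i * (c - qc * r) <= int0 (ell i) (f i) <= ell i * (c + qc * r).
  apply: (edge_J (hl i) (hH i)) => s hs.
  by have := hv i s hs; rewrite ler_norml => /andP[a1 a2]; apply/andP; split; lra.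
have hIb1 : Lt * (c - qc * r) <= I.
  rewrite /Lt mulr_suml; apply: ler_sum => i _; by case/andP: (hJ i).
have hIb2 : I <= Lt * (c + qc * r).
  rewrite /Lt mulr_suml; apply: ler_sum => i _; by case/andP: (hJ i).
have hM i s : 0 <= s <= ell i -> `|f i s| <= `|c| + qc * r.
  move=> hs; have := hv i s hs; have := ler_normD (f i s - c) c; rewrite subrK; lra.
have hP : \sum_(i < nE) int0 (ell i) (fun s => f i s ^+ 2) <= Lt * (`|c| + qc * r) ^+ 2.
  rewrite /Lt mulr_suml; apply: ler_sum => i _; apply: (edge_P (hl i) (hH i)); exact: hM.
apply: le_trans hP _.
have hC := C0_ge0.
case: (ltrgtP 0 Lt) L0 => // [Lpos _|L00 _]; last first.
  by rewrite -L00 mul0r mulr_ge0.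
have hc : Lt * `|c| <= r + Lt * qc * r.
  have : `|Lt * c| <= `|I| + Lt * (qc * r).
    rewrite ler_norml; have := ler_norm I; have := ler_norm (- I); rewrite normrN.
    move: hIb1 hIb2; rewrite mulrBr mulrDr; move=> *; apply/andP; split; lra.
  rewrite normrM gtr0_norm //; lra.
have hZ : Lt * Zc = 1 + 2 * Lt * qc by rewrite /Zc mulrC divfK // gt_eqF.
have hM' : `|c| + qc * r <= Zc * r.
  have : Lt * (`|c| + qc * r) <= Lt * (Zc * r) by rewrite mulrA hZ; lra.
  by rewrite ler_pM2l.
have hM2 : (`|c| + qc * r) ^+ 2 <= (Zc * r) ^+ 2.
  apply: sq_le; rewrite ger0_norm //; apply: addr_ge0 => //.
  apply: mulr_ge0 => //; rewrite /qc addr_ge0 ?addr_ge0 ?mulr_ge0 ?ler0n //.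
  by rewrite /Kc addr_ge0.
rewrite /C0 -rT -mulrA -exprMn; exact: (ler_wpM2l (ltW Lpos) hM2).
Qed.
End scalar.
End S.

Lemma AT_minus {R : realType} (nV nE : nat) (tail : 'I_nE -> 'I_nV) (V : 'I_nV -> 'I_3 -> R) i k :
  AT_apply (Jminus tail) V i k = V (tail i) k.
Proof.
rewrite /AT_apply (bigD1 (tail i)) //= big1 ?addr0.
  by rewrite /Jminus unfold_in eqxx.
by move=> j hj; rewrite /Jminus unfold_in eq_sym (negbTE hj).
Qed.

Lemma AT_plus {R : realType} (nV nE : nat) (head : 'I_nE -> 'I_nV) (V : 'I_nV -> 'I_3 -> R) i k :
  AT_apply (Jplus head) V i k = V (head i) k.
Proof.
rewrite /AT_apply (bigD1 (head i)) //= big1 ?addr0.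
  by rewrite /Jplus unfold_in eqxx.
by move=> j hj; rewrite /Jplus unfold_in eq_sym (negbTE hj).
Qed.

Unset Implicit Arguments.
Set Strict Implicit.

Theorem lemma3p2 (R : realType) (nV nE : nat)
    (tail head : 'I_nE -> 'I_nV) (ell : 'I_nE -> R) :
  graph_connected tail head ->
  (forall i, 0 < ell i) ->
  exists C : R, 0 < C /\
    forall (v dv : 'I_nE -> 'I_3 -> R -> R) (V : 'I_nV -> 'I_3 -> R),
      (forall i k, isH1 (ell i) (v i k) (dv i k)) ->
      Num.sqrt (\sum_(i < nE) \sum_(k < 3) int0 (ell i) (fun s => v i k s ^+ 2))
      <= C * Num.sqrt (
           \sum_(i < nE) \sum_(k < 3) int0 (ell i) (fun s => dv i k s ^+ 2)
         + sqn3 (fun k => \sum_(i < nE) int0 (ell i) (v i k))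
         + \sum_(i < nE) sqn3 (fun k => v i k 0 - AT_apply (Jminus tail) V i k)
         + \sum_(i < nE) sqn3 (fun k => v i k (ell i) - AT_apply (Jplus head) V i k)).
Proof.
move=> hconn hl.
have hC := C0_ge0 nV hl.
exists (Num.sqrt (C0 nV ell) + 1); split.
  by have := sqrtr_ge0 (C0 nV ell); lra.
move=> v dv V hH.
have hk k := @scalar_bound R nV nE tail head ell hconn hl (fun i => v i k) (fun i => dv i k)
  (fun j => V j k) (fun i => hH i k).
set S := (X in _ <= _ * Num.sqrt X).
have hS : S = \sum_(k < 3) (
     \sum_(i < nE) int0 (ell i) (fun s => dv i k s ^+ 2)
   + (\sum_(i < nE) int0 (ell i) (v i k)) ^+ 2
   + \sum_(i < nE) (v i k 0 - V (tail i) k) ^+ 2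
   + \sum_(i < nE) (v i k (ell i) - V (head i) k) ^+ 2).
  rewrite /S /sqn3 !big_split /=.
  congr (_ + _ + _ + _); first exact: exchange_big.
    rewrite exchange_big; apply: eq_bigr => k _; apply: eq_bigr => i _.
    by rewrite AT_minus.
  rewrite exchange_big; apply: eq_bigr => k _; apply: eq_bigr => i _.
  by rewrite AT_plus.
have hX : \sum_(i < nE) \sum_(k < 3) int0 (ell i) (fun s => v i k s ^+ 2)
    <= C0 nV ell * S.
  rewrite exchange_big hS mulr_sumr; apply: ler_sum => k _; exact: hk.
apply: le_trans (ler_wsqrtr hX) _.
rewrite sqrtrM // mulrDl mul1r lerDl; exact: sqrtr_ge0.
Qed.
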